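(* For any $\delta>0$ and $n\ge\lambda\ge 14\log\frac{4}{\delta}$, the algorithm $C_\lambda$ is $(\varepsilon,\delta)$-differentially private where \[ \varepsilon=\sqrt{\frac{32\log\frac{4}{\delta}}{\lambda-\sqrt{2\lambda\log\frac{2}{\delta}}}}\cdot\left(1-\frac{\lambda-\sqrt{2\lambda\log\frac{2}{\delta}}}{n}\right). \]
   Context: The algorithm $C_\lambda$ on input $(x_1,\dots,x_n)\in\{0,1\}^n$: sample $s\sim\mathrm{Bin}(n,\lambda/n)$; choose $H$ uniformly at random among subsets of $[n]$ of size $s$; output $\sum_{i\notin H}x_i+B$ where $B\sim\mathrm{Bin}(s,1/2)$ is independent. An algorithm $M$ on $\{0,1\}^n$ is $(\varepsilon,\delta)$-differentially private if for all $X,X'$ differing in one coordinate and every set $W$ of outputs, $\Pr[M(X)\in W]\le e^{\varepsilon}\Pr[M(X')\in W]+\delta$. $\log$ is the natural logarithm. *)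

(* Defs.v *)
From HB Require Import structures.
From mathcomp Require Import all_boot all_order all_algebra.
From mathcomp Require Import reals.
From mathcomp.analysis Require Import sequences exp.
Set Implicit Arguments. Unset Strict Implicit. Unset Printing Implicit Defensive.
Import Order.TTheory GRing.Theory Num.Theory.
Local Open Scope ring_scope.

Definition binom_pmf (R : realType) (n : nat) (p : R) (s : nat) : R :=
  'C(n, s)%:R * p ^+ s * (1 - p) ^+ (n - s).

(* Pr[C_lambda(X) = k] for X in {0,1}^n:
   s ~ Bin(n, lambda/n); H uniform among the C(n,s) subsets of size s;
   output = #{i notin H | x_i = 1} + B with B ~ Bin(s, 1/2). *)
Definition C_lambda_pmf (R : realType) (n : nat) (lam : R)
    (X : {ffun 'I_n -> bool}) (k : 'I_n.+1) : R :=
  \sum_(s < n.+1) binom_pmf n (lam / n%:R) s *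
    \sum_(H : {set 'I_n} | #|H| == s)
      ('C(n, s)%:R)^-1 *
      \sum_(b < s.+1) binom_pmf s (2^-1) b *
        ((#|[set i in ~: H | X i]| + b == k)%N)%:R.

Definition diff_private (R : realType) (n : nat)
    (M : {ffun 'I_n -> bool} -> 'I_n.+1 -> R) (eps delta : R) : Prop :=
  forall X X' : {ffun 'I_n -> bool},
    #|[set i | X i != X' i]| = 1%N ->
    forall W : {set 'I_n.+1},
      \sum_(k in W) M X k <= expR eps * \sum_(k in W) M X' k + delta.

(* Main.v *)
Require Import Defs.
From HB Require Import structures.
From mathcomp Require Import all_boot all_order all_algebra.
From mathcomp Require Import reals.
From mathcomp.analysis Require Import sequences exp.
From mathcomp.algebra_tactics Require Import ring lra.
Import Order.TTheory GRing.Theory Num.Theory.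
Local Open Scope ring_scope.

Definition bmf (R : realType) (m j : nat) : R := 'C(m, j)%:R / 2 ^+ m.
Definition Uf (R : realType) (m j : nat) : R :=
  if j is j'.+1 then bmf R m j' else 0.

Lemma bmf_ge0 (R : realType) m j : 0 <= bmf R m j.
Proof. by rewrite /bmf divr_ge0 // exprn_ge0. Qed.

Lemma Uf_ge0 (R : realType) m j : 0 <= Uf R m j.
Proof. by case: j => [|j] //=; exact: bmf_ge0. Qed.

Lemma binom_half (R : realType) m j : binom_pmf m (2^-1 : R) j = bmf R m j.
Proof.
rewrite /binom_pmf /bmf.
have [lejm|ltmj] := leqP j m; last by rewrite bin_small // !mul0r.
have -> : (1 - 2^-1 : R) = 2^-1 by field.
rewrite -mulrA -exprD subnKC // exprVn //.
Qed.

Lemma bmf_pascal (R : realType) m j :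
  bmf R m.+1 j = (Uf R m j + bmf R m j) / 2.
Proof.
have h2 : (2 ^+ m : R) != 0 by rewrite expf_neq0 // pnatr_eq0.
rewrite /bmf exprS; case: j => [|j] /=.
  by rewrite !bin0 add0r; field.
by rewrite /bmf (binS m j) natrD; field.
Qed.

Lemma expR_quad (R : realType) (x : R) : 0 <= x -> 1 + x + x ^+ 2 / 4 <= expR x.
Proof.
move=> x0.
have -> : x = x / 2 + x / 2 by field.
rewrite expRD.
have h := expR_ge1Dx (x / 2).
have h0 : 0 <= 1 + x / 2 by lra.
have : (1 + x/2) * (1 + x/2) <= expR (x/2) * expR (x/2).
  by apply: ler_pM.
nra.
Qed.

Lemma pow_le (R : realType) (x y : R) n : 0 <= x -> x <= y -> x ^+ n <= y ^+ n.
Proof.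
move=> x0 xy; have y0 : 0 <= y by exact: le_trans xy.
by apply: (@lerXn2r R n x y); rewrite ?nnegrE.
Qed.

Lemma expR_upper (R : realType) (x : R) (k : nat) : x < k.+1%:R ->
  expR x <= ((1 - x / k.+1%:R) ^+ k.+1)^-1.
Proof.
move=> xk.
have kp : 0 < k.+1%:R :> R by rewrite ltr0n.
have hpos : 0 < 1 - x / k.+1%:R.
  by rewrite subr_gt0 ltr_pdivrMr // mul1r.
have e1 : (1 - x / k.+1%:R) <= expR (- (x / k.+1%:R)).
  by have := expR_ge1Dx (- (x / k.+1%:R)); rewrite -[1 - _]/(1 + - _).
have e2 : (1 - x / k.+1%:R) ^+ k.+1 <= expR (- (x / k.+1%:R)) ^+ k.+1.
  by apply: pow_le => //; rewrite ltW.
have kx : k.+1%:R * (x / k.+1%:R) = x.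
  by field; apply/negP => /eqP h; have := ler0n R k; lra.
rewrite -expRM_natl mulrN kx in e2.
rewrite expRN in e2.
rewrite -[expR x]invrK lef_pV2 ?posrE ?exprn_gt0 ?invr_gt0 ?expR_gt0 //.
Qed.

Lemma expR_lowerk (R : realType) (x : R) (k : nat) : 0 <= x ->
  (1 + x / k.+1%:R) ^+ k.+1 <= expR x.
Proof.
move=> x0.
have kp : 0 < k.+1%:R :> R by rewrite ltr0n.
have e1 := expR_ge1Dx (x / k.+1%:R).
have : (1 + x / k.+1%:R) ^+ k.+1 <= expR (x / k.+1%:R) ^+ k.+1.
  by apply: pow_le => //; rewrite addr_ge0 // divr_ge0 // ltW.
have kx : k.+1%:R * (x / k.+1%:R) = x.
  by field; apply/negP => /eqP h; have := ler0n R k; lra.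
by rewrite -expRM_natl kx.
Qed.


Lemma sum_binom_pow (R : realType) m (y : R) :
  \sum_(t < m.+1) 'C(m, t)%:R * y ^+ t = (1 + y) ^+ m.
Proof.
rewrite addrC exprD1n; apply: eq_bigr => i _; by rewrite mulr_natl.
Qed.

Lemma chern_sum (R : realType) m (K a y : R) :
  \sum_(i < m.+1) bmf R m i * (K * a ^+ m * y ^+ i) = K * (a * (1 + y) / 2) ^+ m.
Proof.
have h2 : (2 ^+ m : R) != 0 by rewrite expf_neq0 // pnatr_eq0.
transitivity (K * a ^+ m / 2 ^+ m * \sum_(i < m.+1) 'C(m, i)%:R * y ^+ i).
  rewrite mulr_sumr; apply: eq_bigr => i _; rewrite /bmf; ring.
rewrite sum_binom_pow !exprMn exprVn; ring.
Qed.

Lemma bin_rel (R : realType) m i : (i < m)%N ->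
  i.+1%:R * ('C(m, i.+1)%:R : R) = (m%:R - i%:R) * 'C(m, i)%:R.
Proof.
move=> im; rewrite -natrB; last exact: ltnW.
by rewrite -natrM -natrM mul_bin_left.
Qed.

Lemma Cpos (R : realType) m i : (i <= m)%N -> 0 < ('C(m, i)%:R : R).
Proof. by move=> im; rewrite ltr0n bin_gt0. Qed.

Lemma chern1 (R : realType) m (rho th : R) : 0 <= rho -> 0 <= th ->
  \sum_(j < m.+2) (if rho * bmf R m j < Uf R m j then Uf R m j else 0)
   <= expR th * ((expR th + expR (- (rho * th))) / 2) ^+ m.
Proof.
move=> r0 t0.
rewrite big_ord_recl /= (_ : (if _ then 0 else 0) = 0 :> R); last by case: ifP.
rewrite add0r.
apply: (@le_trans _ _ (\sum_(i < m.+1) bmf R m i *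
   (expR th * expR (- (rho * th)) ^+ m * expR (th * (1 + rho)) ^+ i))).
  apply: ler_sum => i _.
  have e : expR th * expR (- (rho * th)) ^+ m * expR (th * (1 + rho)) ^+ i
     = expR (th * ((1 + rho) * i%:R + 1 - rho * m%:R)).
    by rewrite -(expRM_natl m) -(expRM_natl i) -!expRD; congr expR; ring.
  rewrite e /bump /=.
  case: ifP => [bad|_]; last by rewrite mulr_ge0 ?bmf_ge0 ?expR_ge0.
  rewrite add0n add1n in bad *.
  have m0 : 0 <= m%:R :> R by exact: ler0n.
  have arg0 : 0 <= (1 + rho) * i%:R + 1 - rho * m%:R.
    have := ltn_ord i; rewrite ltnS leq_eqVlt => /orP [/eqP ->| im].
      lra.
    have C0 := Cpos R m i (ltnW im).
    have rel := bin_rel R m i im.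
    have hb : rho * 'C(m, i.+1)%:R < 'C(m, i)%:R.
      move: bad; rewrite /bmf mulrA ltr_pM2r //.
      by rewrite invr_gt0 exprn_gt0.
    have ip : 0 < i.+1%:R :> R by rewrite ltr0n.
    have h1 : rho * (m%:R - i%:R) * 'C(m, i)%:R < i.+1%:R * 'C(m, i)%:R.
      rewrite -mulrA -rel; nra.
    rewrite ltr_pM2r // -(natr1 i) in h1.
    lra.
  have ea : 1 <= expR (th * ((1 + rho) * i%:R + 1 - rho * m%:R)).
    apply: le_trans (expR_ge1Dx _); rewrite lerDl; exact: mulr_ge0.
  have := bmf_ge0 R m i; nra.
rewrite chern_sum.
have -> : expR (- (rho * th)) * (1 + expR (th * (1 + rho))) =
   expR th + expR (- (rho * th)).
  rewrite mulrDr mulr1 -expRD (_ : - (rho * th) + th * (1 + rho) = th).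
    by rewrite addrC.
  by ring.
by [].
Qed.

Lemma chern2 (R : realType) m (rho th : R) : 0 <= rho -> 0 <= th ->
  \sum_(j < m.+2) (if rho * Uf R m j < bmf R m j then bmf R m j else 0)
   <= expR th * ((expR th + expR (- (rho * th))) / 2) ^+ m.
Proof.
move=> r0 t0.
rewrite big_ord_recr /=.
rewrite [X in _ + X](_ : _ = 0); last first.
  by rewrite /bmf (bin_small (ltnSn m)) mul0r; case: ifP.
rewrite addr0.
apply: (@le_trans _ _ (\sum_(i < m.+1) bmf R m i *
   (expR th * expR th ^+ m * expR (- (th * (1 + rho))) ^+ i))).
  apply: ler_sum => i _.
  have e : expR th * expR th ^+ m * expR (- (th * (1 + rho))) ^+ i
     = expR (th * (m%:R + 1 - (1 + rho) * i%:R)).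
    by rewrite -(expRM_natl m) -(expRM_natl i) -!expRD; congr expR; ring.
  rewrite e /=; clear e.
  case: ifP => [bad|_]; last by rewrite mulr_ge0 ?bmf_ge0 ?expR_ge0.
  have m0 : 0 <= m%:R :> R by exact: ler0n.
  have arg0 : 0 <= m%:R + 1 - (1 + rho) * i%:R.
    case: i bad => [[|j] /= jm] bad.
      lra.
    have jm' : (j < m)%N by [].
    have C0 := Cpos R m j (ltnW jm').
    have rel := bin_rel R m j jm'.
    have hb : rho * 'C(m, j)%:R < 'C(m, j.+1)%:R.
      move: bad; rewrite /bmf mulrA ltr_pM2r //.
      by rewrite invr_gt0 exprn_gt0.
    have ip : 0 < j.+1%:R :> R by rewrite ltr0n.
    have h1 : rho * j.+1%:R * 'C(m, j)%:R < (m%:R - j%:R) * 'C(m, j)%:R.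
      rewrite -rel; nra.
    rewrite ltr_pM2r // -(natr1 j) in h1.
    rewrite -(natr1 j); lra.
  have ea : 1 <= expR (th * (m%:R + 1 - (1 + rho) * i%:R)).
    apply: le_trans (expR_ge1Dx _); rewrite lerDl; exact: mulr_ge0.
  have := bmf_ge0 R m i; nra.
rewrite chern_sum.
have -> : expR th * (1 + expR (- (th * (1 + rho)))) =
   expR th + expR (- (rho * th)).
  rewrite mulrDr mulr1 -expRD (_ : th + - (th * (1 + rho)) = - (rho * th)) //.
  by ring.
by [].
Qed.


Lemma key_poly (R : realType) (q E : R) : 0 <= q -> q <= 1 -> 0 <= E ->
  q * (E + E ^+ 2 / 4) <=
  (q * E + (q * E) ^+ 2 / 4) * (1 + (E + E ^+ 2 / 4) * (1 - q) / 2).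
Proof.
move=> q0 q1 E0.
rewrite -subr_ge0.
have -> : (q * E + (q * E) ^+ 2 / 4) * (1 + (E + E ^+ 2 / 4) * (1 - q) / 2)
   - q * (E + E ^+ 2 / 4) =
   q * ((1 - q) * (E ^+ 2 / 4 + E ^+ 3 / 8) +
        (E ^+ 2 * (E + E ^+ 2 / 4) / 8) * q * (1 - q)).
  by field.
have h1 : 0 <= 1 - q by lra.
have h2 : 0 <= E ^+ 2 by exact: sqr_ge0.
have h3 : 0 <= E ^+ 3 by exact: exprn_ge0.
have hs : 0 <= E + E ^+ 2 / 4 by lra.
have h4 : 0 <= E ^+ 2 * (E + E ^+ 2 / 4) by exact: mulr_ge0.
have h5 : 0 <= E ^+ 2 * (E + E ^+ 2 / 4) / 8 by lra.
have h6 : 0 <= E ^+ 2 * (E + E ^+ 2 / 4) / 8 * q by exact: mulr_ge0.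
have h7 : 0 <= E ^+ 2 * (E + E ^+ 2 / 4) / 8 * q * (1 - q) by exact: mulr_ge0.
have h8 : 0 <= (1 - q) * (E ^+ 2 / 4 + E ^+ 3 / 8) by apply: mulr_ge0 => //; lra.
apply: mulr_ge0 => //; lra.
Qed.

Lemma pair_point (R : realType) (U V I p E eps : R) :
  0 <= U -> 0 <= V -> 0 <= I -> I <= 1 -> 0 <= p -> p <= 1 -> 0 <= E ->
  (1 - p) * E <= eps ->
  I * ((1 - p / 2) * U + p / 2 * V) - expR eps * (I * (p / 2 * U + (1 - p / 2) * V))
  <= (if (1 + E + E ^+ 2 / 4) * V < U then U else 0).
Proof.
move=> U0 V0 I0 I1 p0 p1 E0 epsE.
have q0 : 0 <= 1 - p by lra.
have qE0 : 0 <= (1 - p) * E by exact: mulr_ge0.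
have ge : (1 - p) * E + ((1 - p) * E) ^+ 2 / 4 <= expR eps - 1.
  have h1 := expR_quad R _ qE0.
  have h2 : expR ((1 - p) * E) <= expR eps by rewrite ler_expR.
  lra.
have e0 : 0 <= expR eps by exact: expR_ge0.
have B0 : 0 <= p / 2 * U + (1 - p / 2) * V.
  apply: addr_ge0; apply: mulr_ge0 => //; lra.
have A0 : 0 <= (1 - p / 2) * U + p / 2 * V.
  apply: addr_ge0; apply: mulr_ge0 => //; lra.
have sE : 0 <= E + E ^+ 2 / 4 by have := sqr_ge0 E; lra.
case: ifP => [bad | /negbT nb].
  have VU : V <= U.
    have : 0 <= (E + E ^+ 2 / 4) * V by exact: mulr_ge0.
    lra.
  have h1 : I * ((1 - p / 2) * U + p / 2 * V) <= (1 - p / 2) * U + p / 2 * V.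
    by rewrite ler_piMl.
  have h2 : 0 <= expR eps * (I * (p / 2 * U + (1 - p / 2) * V)).
    by apply: mulr_ge0 => //; apply: mulr_ge0.
  have h3 : (1 - p / 2) * U + p / 2 * V <= U.
    have : p / 2 * V <= p / 2 * U by apply: ler_wpM2l => //; lra.
    lra.
  lra.
rewrite -leNgt in nb.
suff key : (1 - p / 2) * U + p / 2 * V <= expR eps * (p / 2 * U + (1 - p / 2) * V).
  have : I * ((1 - p / 2) * U + p / 2 * V) <=
         I * (expR eps * (p / 2 * U + (1 - p / 2) * V)) by exact: ler_wpM2l.
  lra.
have gB : 0 <= (expR eps - 1) * (p / 2 * U + (1 - p / 2) * V).
  apply: mulr_ge0 => //; have := sqr_ge0 ((1 - p) * E); lra.
have [UV|VU] := lerP U V.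
  have : (1 - p) * (U - V) <= 0.
    by rewrite mulr_ge0_le0 //; lra.
  lra.
set d := U - V.
set s := E + E ^+ 2 / 4.
set g := expR eps - 1.
have d0 : 0 < d by rewrite /d; lra.
have ds : d <= s * V by rewrite /d /s; lra.
have s0 : 0 < s.
  rewrite lt0r sE andbT; apply/negP => /eqP s00.
  by move: ds; rewrite s00 mul0r; lra.
have kp := key_poly R _ _ q0 (_ : 1 - p <= 1) E0.
have q1 : 1 - p <= 1 by lra.
have kp' := kp q1.
rewrite -/s (_ : 1 - (1 - p) = p) in kp'; last by ring.
have g0 : 0 <= g by rewrite /g; have := sqr_ge0 ((1 - p) * E); lra.
set K := (1 - p) * E + ((1 - p) * E) ^+ 2 / 4 in kp' ge.
have dd : 0 <= d by exact: ltW.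
have c0 : 0 <= (1 + s * p / 2) by have := mulr_ge0 (ltW s0) p0; lra.
have h1 : (1 - p) * s * d <= K * (1 + s * p / 2) * d by apply: ler_wpM2r.
have h2 : K * (1 + s * p / 2) * d <= g * (1 + s * p / 2) * d.
  by apply: ler_wpM2r => //; apply: ler_wpM2r.
have h3 : g * (1 + s * p / 2) * d <= g * (s * V + s * (p / 2) * d).
  have : g * d <= g * (s * V) by apply: ler_wpM2l.
  have e1 : g * (1 + s * p / 2) * d = g * d + g * (s * (p / 2) * d) by ring.
  have e2 : g * (s * V + s * (p / 2) * d) = g * (s * V) + g * (s * (p / 2) * d) by ring.
  lra.
have h4 : s * ((1 - p) * d) <= s * (g * (V + p / 2 * d)).
  have e1 : s * ((1 - p) * d) = (1 - p) * s * d by ring.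
  have e2 : s * (g * (V + p / 2 * d)) = g * (s * V + s * (p / 2) * d) by ring.
  lra.
rewrite ler_pM2l // in h4.
have hd : d = U - V by [].
have hg : g = expR eps - 1 by [].
have e3 : expR eps * (p / 2 * U + (1 - p / 2) * V) =
   (p / 2 * U + (1 - p / 2) * V) + g * (p / 2 * U + (1 - p / 2) * V) by rewrite hg; ring.
have e4 : g * (p / 2 * U + (1 - p / 2) * V) = g * (V + p / 2 * d) by rewrite hd; ring.
have e5 : (1 - p) * d = (1 - p / 2) * U + p / 2 * V - (p / 2 * U + (1 - p / 2) * V)
  by rewrite hd; field.
lra.
Qed.


Lemma exp_le_c (R : realType) (th c : R) : th < 8 ->
  1 <= c * (1 - th / 8) ^+ 8 -> expR th <= c.
Proof.
move=> t8 hc.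
have h := expR_upper R th 7 t8.
have xp : 0 < (1 - th / 8) ^+ 8 by apply: exprn_gt0; lra.
apply: (le_trans h).
by rewrite -div1r ler_pdivrMr.
Qed.

Lemma expN_le_c (R : realType) (x c : R) : 0 <= x ->
  1 <= c * (1 + x / 8) ^+ 8 -> expR (- x) <= c.
Proof.
move=> x0 hc.
have h := expR_lowerk R x 7 x0.
have xp : 0 < (1 + x / 8) ^+ 8 by apply: exprn_gt0; lra.
have c0 : 0 <= c.
  by nra.
rewrite expRN -div1r ler_pdivrMr ?expR_gt0 //.
apply: (le_trans hc); exact: ler_wpM2l.
Qed.

Lemma interval_case (R : realType) (E a b th c1 c2 : R) :
  a <= E -> E <= b -> 0 <= a -> 0 <= th ->
  expR th <= c1 -> expR (- ((1 + a + a ^+ 2 / 4) * th)) <= c2 ->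
  c1 + c2 <= 2 - b ^+ 2 / 16 ->
  E ^+ 2 / 32 <= 1 - (expR th + expR (- ((1 + E + E ^+ 2 / 4) * th))) / 2.
Proof.
move=> aE Eb a0 t0 h1 h2 h3.
have r : (1 + a + a ^+ 2 / 4) * th <= (1 + E + E ^+ 2 / 4) * th.
  apply: ler_wpM2r => //; nra.
have h4 : expR (- ((1 + E + E ^+ 2 / 4) * th)) <= c2.
  apply: le_trans h2; rewrite ler_expR; lra.
have h5 : E ^+ 2 <= b ^+ 2 by nra.
lra.
Qed.

Lemma small_case (R : realType) (E : R) : 0 <= E -> E <= 3 / 10 ->
  E ^+ 2 / 32 <= 1 - (expR (E / 4) + expR (- ((1 + E + E ^+ 2 / 4) * (E / 4)))) / 2.
Proof.
move=> E0 E1.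
set th := E / 4.
set u := (1 + E + E ^+ 2 / 4) * th.
have t0 : 0 <= th by rewrite /th; lra.
have u0 : 0 <= u by rewrite /u; apply: mulr_ge0 => //; nra.
have h1 : expR th <= 1 + th + 11 / 10 * th ^+ 2.
  have h := expR_upper R th 0 (_ : th < 1).
  have hp : 0 < 1 - th / 1 by rewrite /th; lra.
  apply: (le_trans (h _)); first by rewrite /th; lra.
  rewrite expr1 -div1r ler_pdivrMr //.
  rewrite /th; nra.
have h2 : expR (- u) <= 1 - u + u ^+ 2.
  rewrite expRN -div1r ler_pdivrMr ?expR_gt0 //.
  have := expR_ge1Dx u.
  have : 0 <= 1 - u + u ^+ 2 by nra.
  move=> a b; have : (1 - u + u ^+ 2) * (1 + u) <= (1 - u + u ^+ 2) * expR u.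
    exact: ler_wpM2l.
  nra.
have rho2 : (1 + E + E ^+ 2 / 4) ^+ 2 <= 19 / 10 + E by nra.
have eu : u = (1 + E + E ^+ 2 / 4) * (E / 4) by [].
have eth : th = E / 4 by [].
have hu2 : u ^+ 2 = (1 + E + E ^+ 2 / 4) ^+ 2 * E ^+ 2 / 16 by rewrite eu; field.
have : (1 + E + E ^+ 2 / 4) ^+ 2 * E ^+ 2 <= (19 / 10 + E) * E ^+ 2.
  by apply: ler_wpM2r => //; exact: sqr_ge0.
rewrite eu eth in h2 h1 * => h3.
nra.
Qed.


Lemma iv (R : realType) (E a b th c1 c2 : R) :
  a <= E -> E <= b -> 0 <= a -> 0 <= th -> th < 8 -> 0 <= (1 + a + a ^+ 2 / 4) * th ->
  1 <= c1 * (1 - th / 8) ^+ 8 ->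
  1 <= c2 * (1 + (1 + a + a ^+ 2 / 4) * th / 8) ^+ 8 ->
  c1 + c2 <= 2 - b ^+ 2 / 16 ->
  E ^+ 2 / 32 <= 1 - (expR th + expR (- ((1 + E + E ^+ 2 / 4) * th))) / 2.
Proof.
move=> aE Eb a0 t0 t8 x0 n1 n2 n3.
apply: (interval_case R E a b th c1 c2 aE Eb a0 t0 _ _ n3).
  exact: (exp_le_c R th c1 t8 n1).
exact: (expN_le_c R _ c2 x0 n2).
Qed.

Lemma analytic (R : realType) (E : R) : 0 <= E -> E <= 2 ->
  exists th : R, [/\ 0 <= th, th <= 1 / 4 &
  E ^+ 2 / 32 <= 1 - (expR th + expR (- ((1 + E + E ^+ 2 / 4) * th))) / 2].
Proof.
move=> E0 E2.
have [e1|e1] := lerP E (3/10).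
  by exists (E / 4); split; [lra | lra | exact: small_case].
have [e2|e2] := lerP E (1/2).
  exists (2/25); split; [lra|lra|].
  apply: (@iv R E (3/10) (1/2) (2/25) (5419/5000) (9003/10000)); lra.
have [e3|e3] := lerP E (4/5).
  exists (3/25); split; [lra|lra|].
  apply: (@iv R E (1/2) (4/5) (3/25) (5643/5000) (8309/10000)); lra.
have [e4|e4] := lerP E (6/5).
  exists (17/100); split; [lra|lra|].
  apply: (@iv R E (4/5) (6/5) (17/100) (19/16) (1443/2000)); lra.
have [e5|e5] := lerP E (33/20).
  exists (23/100); split; [lra|lra|].
  apply: (@iv R E (6/5) (33/20) (23/100) (12629/10000) (2833/5000)); lra.
exists (21/100); split; [lra|lra|].
apply: (@iv R E (33/20) 2 (21/100) (3093/2500) (1023/2000)); lra.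
Qed.


Definition Ind (R : realType) n (W : {set 'I_n.+1}) (v : nat) : R :=
  \sum_(k in W) ((v == k)%N)%:R.

Lemma Ind_ge0 (R : realType) n W v : 0 <= Ind R n W v.
Proof. by apply: sumr_ge0 => k _; rewrite ler0n. Qed.

Lemma Ind_le1 (R : realType) n W v : Ind R n W v <= 1.
Proof.
rewrite /Ind.
apply: (@le_trans _ _ (\sum_(k < n.+1) ((v == k)%N)%:R)).
  rewrite [X in _ <= X](bigID (fun k => k \in W)) /= lerDl.
  by apply: sumr_ge0 => k _; rewrite ler0n.
have [vn|nv] := ltnP v n.+1.
  rewrite (bigD1 (Ordinal vn)) //= eqxx big1 ?addr0 // => k kv.
  case: eqP => // e; case/eqP: kv; exact: val_inj.
rewrite big1 // => k _; case: eqP => // e.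
by move: (ltn_ord k); rewrite -e ltnNge nv.
Qed.

Definition cnt n (X : {ffun 'I_n -> bool}) (H : {set 'I_n}) : nat :=
  #|[set i in ~: H | X i]|.

Lemma sum_by_card (R : realType) n (P : pred {set 'I_n}) (F : {set 'I_n} -> R) :
  \sum_(H | P H) F H = \sum_(s < n.+1) \sum_(H | P H && (#|H| == s)) F H.
Proof.
rewrite (partition_big (fun H : {set 'I_n} => (inord #|H| : 'I_n.+1)) xpredT) //.
apply: eq_bigr => s _; apply: eq_bigl => H; congr andb.
have hc : (#|H| <= n)%N by have := max_card H; rewrite card_ord.
apply/eqP/eqP => [<-|e]; first by rewrite inordK.
by rewrite e inord_val.
Qed.

Lemma pmf_repr (R : realType) n (lam : R) X (k : 'I_n.+1) :
  @C_lambda_pmf R n lam X k =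
  \sum_(H : {set 'I_n}) ((lam / n%:R) ^+ #|H| * (1 - lam / n%:R) ^+ (n - #|H|)) *
     \sum_(b < #|H|.+1) bmf R #|H| b * ((cnt n X H + b == k)%N)%:R.
Proof.
rewrite /C_lambda_pmf (sum_by_card R n xpredT) /=.
apply: eq_bigr => s _.
rewrite mulr_sumr; apply: eq_bigr => H /eqP Hs; rewrite Hs.
have Cs : ('C(n, s)%:R : R) != 0 by rewrite pnatr_eq0 -lt0n bin_gt0 -ltnS.
rewrite /binom_pmf mulrA; congr (_ * _).
  by field.
by apply: eq_bigr => b _; rewrite -binom_half /binom_pmf.
Qed.

Lemma sumW_repr (R : realType) n (lam : R) X (W : {set 'I_n.+1}) :
  \sum_(k in W) @C_lambda_pmf R n lam X k =
  \sum_(H : {set 'I_n}) ((lam / n%:R) ^+ #|H| * (1 - lam / n%:R) ^+ (n - #|H|)) *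
     \sum_(b < #|H|.+1) bmf R #|H| b * Ind R n W (cnt n X H + b).
Proof.
under eq_bigr do rewrite pmf_repr.
rewrite exchange_big /=; apply: eq_bigr => H _.
rewrite -mulr_sumr; congr (_ * _).
rewrite exchange_big /=; apply: eq_bigr => b _.
by rewrite /Ind mulr_sumr.
Qed.

Lemma pair_split (R : realType) n (i : 'I_n) (F : {set 'I_n} -> R) :
  \sum_(H : {set 'I_n}) F H = \sum_(H : {set 'I_n} | i \notin H) (F H + F (i |: H)).
Proof.
rewrite big_split /= [LHS](bigID (fun H : {set 'I_n} => i \in H)) /= addrC; congr (_ + _).
rewrite (reindex_onto (fun H : {set 'I_n} => i |: H) (fun H : {set 'I_n} => H :\ i)) /=.
  apply: eq_bigl => H; rewrite setU11 /=.
  apply/eqP/idP => [<-|iH]; first by rewrite setD11.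
  by rewrite setU1K.
by move=> H iH; rewrite setD1K.
Qed.

Lemma cnt_add n (Y : {ffun 'I_n -> bool}) (H : {set 'I_n}) (i : 'I_n) : i \notin H ->
  cnt n Y H = (cnt n Y (i |: H) + Y i)%N.
Proof.
move=> iH; rewrite /cnt.
case Yi: (Y i).
  have e : [set j in ~: H | Y j] = i |: [set j in ~: (i |: H) | Y j].
    apply/setP => j; rewrite !inE.
    by case: (eqVneq j i) => [->|ji] //=; rewrite iH Yi.
  by rewrite e cardsU1 !inE eqxx /= addn1.
rewrite addn0; apply: eq_card => j; rewrite !inE.
by case: (eqVneq j i) => [->|ji] //=; rewrite Yi andbF.
Qed.

Lemma cnt_agree n (X X' : {ffun 'I_n -> bool}) (H : {set 'I_n}) (i : 'I_n) :
  (forall j, j != i -> X j = X' j) -> cnt n X (i |: H) = cnt n X' (i |: H).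
Proof.
move=> ag; rewrite /cnt; apply: eq_card => j; rewrite !inE.
by case: (eqVneq j i) => [->|ji] //=; rewrite ag.
Qed.

Lemma subset_sum (R : realType) N (i : 'I_N.+1) (x y : R) :
  \sum_(H : {set 'I_N.+1} | i \notin H) x ^+ #|H| * y ^+ (N - #|H|) = (x + y) ^+ N.
Proof.
rewrite (sum_by_card R N.+1 (fun H => i \notin H)) big_ord_recr /=.
rewrite [X in _ + X]big1 ?addr0; last first.
  move=> H /andP [iH /eqP cH].
  have : (#|H| <= N)%N.
    have : (#|H| <= #|[set~ i]|)%N.
      apply: subset_leq_card; apply/subsetP => j jH.
      by rewrite !inE; apply: contraNneq iH => <-.
    by rewrite cardsC1 card_ord.
  by rewrite cH ltnn.
rewrite addrC exprDn; apply: eq_bigr => s _.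
rewrite (eq_bigr (fun _ => y ^+ (N - s) * x ^+ s)); last first.
  by move=> H /andP [_ /eqP ->]; rewrite mulrC.
rewrite sumr_const; congr (_ *+ _).
have := cards_draws [set~ i] s; rewrite cardsC1 card_ord /= => <-.
apply: eq_card => H; rewrite !inE; congr andb.
apply/idP/subsetP => [iH j jH|sub]; first by rewrite !inE; apply: contraNneq iH => <-.
by apply/negP => /sub; rewrite !inE eqxx.
Qed.


Definition S1 (R : realType) n W (x : bool) m A : R :=
  \sum_(b < m.+1) bmf R m b * Ind R n W (A + x + b).
Definition S2 (R : realType) n W m A : R :=
  \sum_(b < m.+2) bmf R m.+1 b * Ind R n W (A + b).

Lemma S1_true (R : realType) n W m A :
  S1 R n W true m A = \sum_(j < m.+2) Uf R m j * Ind R n W (A + j).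
Proof.
rewrite /S1 [RHS]big_ord_recl /= mul0r add0r; apply: eq_bigr => b _.
by rewrite /bump /= add1n addn1 addnS.
Qed.

Lemma S1_false (R : realType) n W m A :
  S1 R n W false m A = \sum_(j < m.+2) bmf R m j * Ind R n W (A + j).
Proof.
rewrite /S1 [RHS]big_ord_recr /= {3}/bmf (bin_small (ltnSn m)) mul0r mul0r addr0.
by apply: eq_bigr => b _; rewrite addn0.
Qed.

Lemma S2_eq (R : realType) n W m A :
  S2 R n W m A = \sum_(j < m.+2) (Uf R m j + bmf R m j) / 2 * Ind R n W (A + j).
Proof. by apply: eq_bigr => b _; rewrite bmf_pascal. Qed.

Lemma pairA (R : realType) n W m A (p eps E th : R) :
  0 <= p -> p <= 1 -> 0 <= E -> (1 - p) * E <= eps -> 0 <= th ->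
  (1 - p) * S1 R n W true m A + p * S2 R n W m A
   - expR eps * ((1 - p) * S1 R n W false m A + p * S2 R n W m A)
  <= expR th * ((expR th + expR (- ((1 + E + E ^+ 2 / 4) * th))) / 2) ^+ m.
Proof.
move=> p0 p1 E0 eE t0.
have rho0 : 0 <= 1 + E + E ^+ 2 / 4 by have := sqr_ge0 E; lra.
apply: le_trans (chern1 R m _ th rho0 t0).
rewrite S1_true S1_false S2_eq.
have -> : (1 - p) * (\sum_(j < m.+2) Uf R m j * Ind R n W (A + j)) +
    p * (\sum_(j < m.+2) (Uf R m j + bmf R m j) / 2 * Ind R n W (A + j)) =
    \sum_(j < m.+2) Ind R n W (A + j) * ((1 - p / 2) * Uf R m j + p / 2 * bmf R m j).
  by rewrite !mulr_sumr -big_split; apply: eq_bigr => j _ /=; field.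
have -> : (1 - p) * (\sum_(j < m.+2) bmf R m j * Ind R n W (A + j)) +
    p * (\sum_(j < m.+2) (Uf R m j + bmf R m j) / 2 * Ind R n W (A + j)) =
    \sum_(j < m.+2) Ind R n W (A + j) * (p / 2 * Uf R m j + (1 - p / 2) * bmf R m j).
  by rewrite !mulr_sumr -big_split; apply: eq_bigr => j _ /=; field.
rewrite mulr_sumr -sumrB; apply: ler_sum => j _.
exact: (pair_point R (Uf R m j) (bmf R m j) _ p E eps (Uf_ge0 R m j) (bmf_ge0 R m j)
   (Ind_ge0 R n W _) (Ind_le1 R n W _) p0 p1 E0 eE).
Qed.

Lemma pairB (R : realType) n W m A (p eps E th : R) :
  0 <= p -> p <= 1 -> 0 <= E -> (1 - p) * E <= eps -> 0 <= th ->
  (1 - p) * S1 R n W false m A + p * S2 R n W m A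
   - expR eps * ((1 - p) * S1 R n W true m A + p * S2 R n W m A)
  <= expR th * ((expR th + expR (- ((1 + E + E ^+ 2 / 4) * th))) / 2) ^+ m.
Proof.
move=> p0 p1 E0 eE t0.
have rho0 : 0 <= 1 + E + E ^+ 2 / 4 by have := sqr_ge0 E; lra.
apply: le_trans (chern2 R m _ th rho0 t0).
rewrite S1_true S1_false S2_eq.
have -> : (1 - p) * (\sum_(j < m.+2) Uf R m j * Ind R n W (A + j)) +
    p * (\sum_(j < m.+2) (Uf R m j + bmf R m j) / 2 * Ind R n W (A + j)) =
    \sum_(j < m.+2) Ind R n W (A + j) * (p / 2 * bmf R m j + (1 - p / 2) * Uf R m j).
  by rewrite !mulr_sumr -big_split; apply: eq_bigr => j _ /=; field.
have -> : (1 - p) * (\sum_(j < m.+2) bmf R m j * Ind R n W (A + j)) +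
    p * (\sum_(j < m.+2) (Uf R m j + bmf R m j) / 2 * Ind R n W (A + j)) =
    \sum_(j < m.+2) Ind R n W (A + j) * ((1 - p / 2) * bmf R m j + p / 2 * Uf R m j).
  by rewrite !mulr_sumr -big_split; apply: eq_bigr => j _ /=; field.
rewrite mulr_sumr -sumrB; apply: ler_sum => j _.
exact: (pair_point R (bmf R m j) (Uf R m j) _ p E eps (bmf_ge0 R m j) (Uf_ge0 R m j)
   (Ind_ge0 R n W _) (Ind_le1 R n W _) p0 p1 E0 eE).
Qed.


Lemma card_notin N (i : 'I_N.+1) (H : {set 'I_N.+1}) : i \notin H -> (#|H| <= N)%N.
Proof.
move=> iH.
have : (#|H| <= #|[set~ i]|)%N.
  apply: subset_leq_card; apply/subsetP => j jH.
  by rewrite !inE; apply: contraNneq iH => <-.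
by rewrite cardsC1 card_ord.
Qed.

Lemma pair_expr (R : realType) N (p : R) (Y : {ffun 'I_N.+1 -> bool}) (i : 'I_N.+1)
  (W : {set 'I_N.+2}) (H : {set 'I_N.+1}) : i \notin H ->
  p ^+ #|H| * (1 - p) ^+ (N.+1 - #|H|) *
    \sum_(b < #|H|.+1) bmf R #|H| b * Ind R N.+1 W (cnt N.+1 Y H + b)
  + p ^+ #|i |: H| * (1 - p) ^+ (N.+1 - #|i |: H|) *
    \sum_(b < #|i |: H|.+1) bmf R #|i |: H| b * Ind R N.+1 W (cnt N.+1 Y (i |: H) + b)
  = p ^+ #|H| * (1 - p) ^+ (N - #|H|) *
    ((1 - p) * S1 R N.+1 W (Y i) #|H| (cnt N.+1 Y (i |: H))
     + p * S2 R N.+1 W #|H| (cnt N.+1 Y (i |: H))).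
Proof.
move=> iH.
have mN := card_notin N i H iH.
rewrite cardsU1 iH add1n subSS subSn // exprS.
rewrite /S1 /S2 (cnt_add N.+1 Y H i iH) exprS.
under eq_bigr do rewrite addnAC.
ring.
Qed.

Lemma global (R : realType) N (lam p : R) (X X' : {ffun 'I_N.+1 -> bool})
  (i : 'I_N.+1) (W : {set 'I_N.+2}) (eps E th : R) :
  lam / N.+1%:R = p -> 0 <= p -> p <= 1 ->
  (forall j, j != i -> X j = X' j) -> X' i = ~~ X i ->
  0 <= E -> (1 - p) * E <= eps -> 0 <= th ->
  \sum_(k in W) @C_lambda_pmf R N.+1 lam X k
    - expR eps * \sum_(k in W) @C_lambda_pmf R N.+1 lam X' k
  <= expR th * (p * ((expR th + expR (- ((1 + E + E ^+ 2 / 4) * th))) / 2) + (1 - p)) ^+ N.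
Proof.
move=> hp p0 p1 ag Xi E0 eE t0.
rewrite !sumW_repr hp (pair_split _ _ i) [X in _ - _ * X](pair_split _ _ i).
rewrite mulr_sumr -sumrB.
set c := (expR th + expR (- ((1 + E + E ^+ 2 / 4) * th))) / 2.
rewrite -(subset_sum R N i) mulr_sumr.
apply: ler_sum => H iH.
rewrite !pair_expr // -(cnt_agree N.+1 X X' H i ag) Xi.
have w0 : 0 <= p ^+ #|H| * (1 - p) ^+ (N - #|H|).
  by apply: mulr_ge0; apply: exprn_ge0; lra.
rewrite mulrCA -mulrBr.
rewrite (_ : expR th * ((p * c) ^+ #|H| * (1 - p) ^+ (N - #|H|)) =
   p ^+ #|H| * (1 - p) ^+ (N - #|H|) * (expR th * c ^+ #|H|)); last first.
  by rewrite exprMn; ring.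
apply: ler_wpM2l => //.
case: (X i) => /=.
  exact: pairA.
exact: pairB.
Qed.


Lemma final_bound (R : realType) N (lam p delta E th : R) :
  lam / N.+1%:R = p -> 0 <= p -> p <= 1 -> 0 < delta ->
  0 <= th -> th <= 1 / 4 ->
  E ^+ 2 / 32 <= 1 - (expR th + expR (- ((1 + E + E ^+ 2 / 4) * th))) / 2 ->
  32 * ln (4 / delta) <= lam * E ^+ 2 ->
  expR th * (p * ((expR th + expR (- ((1 + E + E ^+ 2 / 4) * th))) / 2) + (1 - p)) ^+ N
   <= delta.
Proof.
move=> hp p0 p1 d0 t0 t1 hc hl.
set c := (expR th + expR (- ((1 + E + E ^+ 2 / 4) * th))) / 2 in hc *.
have c0 : 0 <= c by rewrite /c; have := expR_ge0 th; have := expR_ge0 (- ((1 + E + E ^+ 2 / 4) * th)); lra.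
have b0 : 0 <= p * c + (1 - p) by have := mulr_ge0 p0 c0; lra.
have b1 : p * c + (1 - p) <= expR (p * (c - 1)).
  by apply: le_trans (expR_ge1Dx _); lra.
have h1 : (p * c + (1 - p)) ^+ N <= expR (N%:R * (p * (c - 1))).
  by rewrite expRM_natl; exact: pow_le.
have Np : N%:R * p = lam - p.
  have nz : (N%:R + 1 : R) != 0 by rewrite natr1 pnatr_eq0.
  by rewrite -hp -(natr1 N); field.
have lam0 : 0 <= lam.
  have nz : (N%:R + 1 : R) != 0 by rewrite natr1 pnatr_eq0.
  have -> : lam = p * N.+1%:R by rewrite -hp -(natr1 N); field.
  by apply: mulr_ge0.
have E2 : 0 <= E ^+ 2 by exact: sqr_ge0.
have hL : (lam - p) * (c - 1) <= 1 - ln (4 / delta).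
  have e1 : (lam - p) * (c - 1) = - (lam * (1 - c)) + p * (1 - c) by ring.
  have e2 : lam * (E ^+ 2 / 32) <= lam * (1 - c) by exact: ler_wpM2l.
  have e3 : p * (1 - c) <= 1.
    have : p * (1 - c) <= 1 * (1 - c) by apply: ler_wpM2r => //; lra.
    lra.
  lra.
have ex : expR th * (p * c + (1 - p)) ^+ N <= expR (5 / 4 - ln (4 / delta)).
  apply: le_trans (_ : expR th * expR (N%:R * (p * (c - 1))) <= _).
    by apply: ler_wpM2l => //; exact: expR_ge0.
  rewrite -expRD ler_expR mulrA Np; lra.
apply: (le_trans ex).
rewrite expRD expRN lnK; last by rewrite posrE divr_gt0.
have e54 : expR (5 / 4 : R) <= 4.
  apply: exp_le_c; lra.
rewrite invf_div.
have : expR (5 / 4 : R) * (delta / 4) <= 4 * (delta / 4).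
  by apply: ler_wpM2r => //; lra.
lra.
Qed.

Theorem claim4p6 (R : realType) (n : nat) (lam delta : R) :
  0 < delta -> 0 <= lam -> lam <= n%:R -> 14 * ln (4 / delta) <= lam ->
  diff_private (@C_lambda_pmf R n lam)
    (Num.sqrt (32 * ln (4 / delta) /
               (lam - Num.sqrt (2 * lam * ln (2 / delta)))) *
     (1 - (lam - Num.sqrt (2 * lam * ln (2 / delta))) / n%:R))
    delta.
Proof.
case: n => [|N] d0 l0 hln hL X X' hXX' W.
  by have := max_card [set i | X i != X' i]; rewrite card_ord hXX'.
have [i hi] : exists i, [set i | X i != X' i] = [set i].
  by apply/cards1P; rewrite hXX'.
have ag : forall j, j != i -> X j = X' j.
  move=> j ji; apply/eqP; apply: contraNT ji => h.
  have : j \in [set i | X i != X' i] by rewrite inE.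
  by rewrite hi inE.
have Xi : X' i = ~~ X i.
  have : i \in [set i | X i != X' i] by rewrite hi set11.
  by rewrite inE; case: (X i); case: (X' i).
have nz : (N%:R + 1 : R) != 0 by rewrite natr1 pnatr_eq0.
have np : (0 : R) < N.+1%:R by rewrite ltr0n.
set p := lam / N.+1%:R.
have hp : lam / N.+1%:R = p by [].
have p0 : 0 <= p by rewrite /p divr_ge0 // ltW.
have p1 : p <= 1 by rewrite /p ler_pdivrMr // mul1r.
set L := ln (4 / delta).
set L2 := ln (2 / delta).
set m0 := lam - Num.sqrt (2 * lam * L2).
set E := Num.sqrt (32 * L / m0).
have hE : E = Num.sqrt (32 * L / m0) by [].
have hm0 : m0 = lam - Num.sqrt (2 * lam * L2) by [].
have hL' : L = ln (4 / delta) by [].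
have hL2 : L2 = ln (2 / delta) by [].
clearbody E m0 L L2 p.
have E0 : 0 <= E by rewrite hE; exact: sqrtr_ge0.
have m0l : m0 <= lam by rewrite hm0; have := sqrtr_ge0 (2 * lam * L2); lra.
have eE : (1 - p) * E <= E * (1 - m0 / N.+1%:R).
  have : m0 / N.+1%:R <= p.
    by rewrite -hp; apply: ler_wpM2r => //; rewrite invr_ge0 ltW.
  move=> h; have h2 : 0 <= E * (p - m0 / N.+1%:R).
    by apply: mulr_ge0 => //; rewrite subr_ge0.
  have e : E * (1 - m0 / N.+1%:R) - (1 - p) * E = E * (p - m0 / N.+1%:R) by ring.
  by rewrite -subr_ge0 e.
set eps := E * (1 - m0 / N.+1%:R).
set PX := \sum_(k in W) _.
set PX' := \sum_(k in W) _.
suff : PX - expR eps * PX' <= delta by lra.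
have [d1|d1] := lerP 1 delta.
  apply: le_trans (global R N lam p X X' i W eps E 0 hp p0 p1 ag Xi E0 eE (lexx 0)) _.
  rewrite mulr0 oppr0 expR0 mul1r.
  have -> : p * ((1 + 1) / 2) + (1 - p) = 1 by field.
  by rewrite expr1n.
have L0 : 0 < L.
  by rewrite hL'; apply: ln_gt0; rewrite ltr_pdivlMr // mul1r; lra.
have L2L : L2 <= L.
  rewrite hL' hL2 ler_ln ?posrE ?divr_gt0 //.
  by apply: ler_wpM2r; [rewrite invr_ge0 ltW | lra].
have L20 : 0 <= L2.
  by rewrite hL2; apply: ln_ge0; rewrite ler_pdivlMr // mul1r; lra.
have lamL : 14 * L <= lam by rewrite hL'.
have sq : Num.sqrt (2 * lam * L2) <= lam - 8 * L.
  have h8 : 0 <= lam - 8 * L by lra.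
  rewrite -(ger0_norm h8) -sqrtr_sqr ler_sqrt; last exact: sqr_ge0.
  have a1 : 0 <= (lam - 14 * L) * (lam - 4 * L) by apply: mulr_ge0; lra.
  have a2 : 2 * lam * L2 <= 2 * lam * L by apply: ler_wpM2l => //; lra.
  have a3 : (lam - 8 * L) ^+ 2 = (lam - 14 * L) * (lam - 4 * L) + 8 * L ^+ 2 + 2 * lam * L by ring.
  have a4 : 0 <= L ^+ 2 by exact: sqr_ge0.
  lra.
have m08 : 8 * L <= m0 by rewrite hm0; lra.
have m0p : 0 < m0 by lra.
have E2 : E ^+ 2 = 32 * L / m0.
  by rewrite hE sqr_sqrtr // divr_ge0 //; lra.
have E4 : E ^+ 2 <= 4 by rewrite E2 ler_pdivrMr //; lra.
have Ele : E <= 2 by nra.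
have lamE : 32 * ln (4 / delta) <= lam * E ^+ 2.
  rewrite -hL' E2.
  have hq : 1 <= lam / m0 by rewrite ler_pdivlMr // mul1r.
  have eq : lam * (32 * L / m0) = (32 * L) * (lam / m0) by rewrite mulrCA !mulrA.
  rewrite eq; have : 0 <= (32 * L) * (lam / m0 - 1) by apply: mulr_ge0; lra.
  have eq2 : (32 * L) * (lam / m0 - 1) = (32 * L) * (lam / m0) - 32 * L by ring.
  lra.
have [th [t0 t1 hc]] := analytic R E E0 Ele.
apply: le_trans (global R N lam p X X' i W eps E th hp p0 p1 ag Xi E0 eE t0) _.
exact: (final_bound R N lam p delta E th hp p0 p1 d0 t0 t1 hc lamE).
Qed.
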